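(* Let $N\ge 2$ be an integer and consider the one-mode projection graph $G_N$ on the primes $\le N$ defined below. For every prime $p\le N$, the degree of $p$ in $G_N$ equals $\pi\left(\frac{N}{p}\right)$, where $\pi(x)$ is the number of primes $\le x$.
   Context: The graph $G_N$ has vertex set the primes $p\le N$. Two distinct primes $p,p'\le N$ are adjacent iff some composite integer $c\le N$ is divisible by both $p$ and $p'$ (equivalently the number of such composites, which is the weight of the edge, is positive). A prime $p$ carries a self-loop iff $p^2\le N$. The degree of $p$ is the number of distinct primes $p'\ne p$ adjacent to $p$, plus $1$ if $p$ carries a self-loop. *)

(* Defs.v *)
From mathcomp Require Import all_boot.
Set Implicit Arguments. Unset Strict Implicit. Unset Printing Implicit Defensive.

Definition composite (c : nat) : bool := (1 < c) && ~~ prime c.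

Definition edge_weight (N p p' : nat) : nat :=
  #|[set c : 'I_N.+1 | composite c && (p %| c) && (p' %| c)]|.

Definition adjacent (N p p' : nat) : bool :=
  [&& prime p, prime p', p <= N, p' <= N, p != p' & 0 < edge_weight N p p'].

Definition self_loop (N p : nat) : bool := p ^ 2 <= N.

Definition degree (N p : nat) : nat :=
  #|[set q : 'I_N.+1 | prime q && adjacent N p q]| + self_loop N p.

Definition primepi (x : nat) : nat := #|[set q : 'I_x.+1 | prime q]|.

(* Main.v *)
Require Import Defs.
From mathcomp Require Import all_boot.
From mathcomp Require Import zify.

Lemma card_sum n (P : pred nat) :
  #|[set x : 'I_n | P (val x)]| = \sum_(i < n) P i.
Proof.
rewrite -sum1_card big_mkcond /=; apply: eq_bigr => i _.
by rewrite inE; case: (P i).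
Qed.

Lemma adjE N p q : prime p -> prime q -> q <= N -> p <= N ->
  adjacent N p q = (q != p) && (p * q <= N).
Proof.
move=> pp pq qN pN; rewrite /adjacent pp pq qN pN /= eq_sym.
case: eqP => //= /eqP npq.
apply/idP/idP.
- case/card_gt0P => c; rewrite inE => /andP [/andP [cc pc] qc].
  have cop : coprime p q by rewrite prime_coprime // dvdn_prime2 // eq_sym.
  have: p * q %| c by rewrite Gauss_dvd // pc qc.
  move: cc; rewrite /composite => /andP [c1 _] d.
  have := dvdn_leq _ d; have := ltn_ord c; lia.
- move=> le; apply/card_gt0P.
  have lt : p * q < N.+1 by [].
  exists (Ordinal lt); rewrite inE /= dvdn_mulr // dvdn_mull // !andbT.
  rewrite /composite; apply/andP; split.
    have := prime_gt1 pp; have := prime_gt1 pq; nia.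
  apply/negP => /primeP [_ H].
  have := H p (dvdn_mulr _ (dvdnn p)) => /orP [/eqP p1|/eqP pe].
    by move: (prime_gt1 pp); rewrite p1.
  have := prime_gt1 pq; have := prime_gt1 pp; nia.
Qed.

Theorem mainTheorem8 (N p : nat) :
  2 <= N -> prime p -> p <= N -> degree N p = primepi (N %/ p).
Proof.
move=> N2 pp pN; have p0 := prime_gt0 pp.
rewrite /degree /primepi.
rewrite (_ : [set q : 'I_N.+1 | prime q && adjacent N p q] =
   [set q : 'I_N.+1 | (fun i => [&& prime i, i != p & p * i <= N]) (val q)]); last first.
  apply/setP => q; rewrite !inE /=.
  case pq: (prime q) => //=; rewrite adjE //; last by rewrite -ltnS.
rewrite (_ : [set q : 'I_(N %/ p).+1 | prime q] =
   [set q : 'I_(N %/ p).+1 | prime (val q)]) //.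
rewrite (card_sum _ (fun i => [&& prime i, i != p & p * i <= N])) card_sum.
set M := N %/ p.
have MN : M.+1 <= N.+1 by rewrite ltnS /M leq_div.
have -> : \sum_(i < N.+1) [&& prime i, (i : nat) != p & p * i <= N] =
   \sum_(i < M.+1) [&& prime i, (i : nat) != p & p * i <= N].
  rewrite [RHS](big_ord_widen N.+1 (fun i : nat => nat_of_bool [&& prime i, i != p & p * i <= N]) MN) [RHS]big_mkcond /=; apply: eq_bigr => i _; case: ltnP => // h.
  have : N %/ p < i by rewrite /M in h.
  rewrite ltnNge leq_divRL // mulnC => /negbTE ->; by rewrite !andbF.
have -> : \sum_(i < M.+1) prime i =
   \sum_(i < M.+1) (prime i && ((i : nat) != p)) + \sum_(i < M.+1) ((i : nat) == p).
  rewrite -big_split /=; apply: eq_bigr => i _.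
  by case: eqP => [->|_]; rewrite ?pp //= addn0 andbT.
congr (_ + _).
  apply: eq_bigr => i _; have := ltn_ord i; rewrite ltnS /M leq_divRL // mulnC => ->.
  by rewrite andbT.
rewrite /self_loop.
have e : (p ^ 2 <= N) = (p < M.+1) by rewrite ltnS /M leq_divRL.
rewrite e; case: ltnP => h.
  rewrite (bigD1 (Ordinal h)) //= eqxx big1 // => i /eqP ne.
  by case: eqP => // ei; case: ne; apply: val_inj.
by rewrite big1 // => i _; case: eqP => // ei; have := ltn_ord i; lia.
Qed.
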